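(* If a filtered group $G=(G_k)\subset S_\infty$ is weakly saturated and $G_5\ne\{1_5\}$, then $G=S_\infty$ or $G=S_\infty^*$.
   Context: A filtered group is a family $G=(G_k)_{k\ge0}$ of subgroups $G_k\subset S_k$ with $\sigma\otimes\tau\in G_{k+l}$ for $\sigma\in G_k,\tau\in G_l$ ($\sigma\otimes\tau$ acts as $\sigma$ on the first $k$ points and as $\tau$ shifted on the last $l$). $S_\infty=(S_k)$, $S_\infty^*=(S_k^* )$ with $S_k^*=\{\sigma\in S_k:\sigma(r)\equiv r\bmod 2\ \forall r\}$. $G$ is weakly saturated if whenever $\sigma\in G_k$ satisfies $\sigma(i+1)=\sigma(i)\pm1$ for some $i$, the permutation $\sigma^{(i,i+1)}\in S_{k-2}$ obtained by deleting the points $i,i+1$ and their images $\sigma(i),\sigma(i+1)$ (and relabelling order-preservingly) belongs to $G_{k-2}$. *)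

(* Defs.v *)
From mathcomp Require Import all_boot all_fingroup.
Set Implicit Arguments. Unset Strict Implicit. Unset Printing Implicit Defensive.
Local Open Scope group_scope.

Definition tensor_fun k l (s : {perm 'I_k}) (t : {perm 'I_l}) (i : 'I_(k + l))
  : 'I_(k + l) :=
  match split i with
  | inl j => lshift l (s j)
  | inr j => rshift k (t j)
  end.

Lemma tensor_fun_inj k l (s : {perm 'I_k}) (t : {perm 'I_l}) :
  injective (tensor_fun s t).
Proof.
move=> x y; rewrite /tensor_fun -{2}(splitK x) -{2}(splitK y).
case: (split x) => a; case: (split y) => b /= /eqP;
  rewrite ?eq_lrshift ?eq_rlshift ?eq_lshift ?eq_rshift // => /eqP/perm_inj->//.
Qed.

Definition tensor k l (s : {perm 'I_k}) (t : {perm 'I_l}) : {perm 'I_(k + l)} :=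
  perm (@tensor_fun_inj k l s t).

Definition filtered (G : forall k, {group {perm 'I_k}}) : Prop :=
  forall k l (s : {perm 'I_k}) (t : {perm 'I_l}),
    s \in G k -> t \in G l -> tensor s t \in G (k + l).

(* Deletion of the points i, i+1 (0-based) of sigma in S_(n+2) and of their
   images, relabelled order-preservingly, giving an element of S_n.
   The raw map below is the paper's formula; it is a permutation whenever
   sigma(i+1) = sigma(i) +- 1 (the only case where it is used); otherwise we
   default to the identity to keep the definition total. *)
Definition del_raw n (s : {perm 'I_n.+2}) (i : nat) (j : 'I_n) : 'I_n :=
  let p := if j < i then val j else (val j).+2 in
  let q := val (s (inord p)) in
  let m := minn (val (s (inord i))) (val (s (inord i.+1))) in
  insubd j (if q < m then q else q - 2).

Definition del_fun n (s : {perm 'I_n.+2}) (i : nat) : 'I_n -> 'I_n :=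
  if injectiveb (del_raw s i) then del_raw s i else id.

Lemma del_fun_inj n (s : {perm 'I_n.+2}) (i : nat) : injective (del_fun s i).
Proof.
rewrite /del_fun; case: injectiveP => // _ x y; exact.
Qed.

Definition del n (s : {perm 'I_n.+2}) (i : nat) : {perm 'I_n} :=
  perm (@del_fun_inj n s i).

(* Weak saturation (with k = n + 2 and 0-based point i, i+1 < k). *)
Definition weakly_saturated (G : forall k, {group {perm 'I_k}}) : Prop :=
  forall n (s : {perm 'I_n.+2}) (i : nat),
    s \in G n.+2 -> i.+1 < n.+2 ->
    (val (s (inord i.+1)) = (val (s (inord i))).+1 \/
     (val (s (inord i.+1))).+1 = val (s (inord i))) ->
    del s i \in G n.

Definition Sstar k : {set {perm 'I_k}} :=
  [set s : {perm 'I_k} | [forall r : 'I_k, odd (s r) == odd r]].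

(* Main.v *)
Require Import Defs.
From mathcomp Require Import all_boot all_fingroup zify.
From Stdlib Require Import Classical.
Unset Printing Implicit Defensive.

Local Open Scope group_scope.

Definition valid k (l : seq nat) := (size l == k) && uniq l && all (fun x => x < k) l.
Definition lp_fun k (l : seq nat) (i : 'I_k) : 'I_k := insubd i (nth 0 l i).
Definition lp_f k l : 'I_k -> 'I_k := if injectiveb (lp_fun k l) then lp_fun k l else id.
Lemma lp_f_inj k l : injective (lp_f k l).
Proof. rewrite /lp_f; case: injectiveP => // _ x y; exact. Qed.
Definition lp k l : {perm 'I_k} := perm (@lp_f_inj k l).

Lemma lpE k l (i : 'I_k) : valid k l -> val (lp k l i) = nth 0 l i.
Proof.
case/andP=> /andP[/eqP sz un] al.
have lt : forall j : 'I_k, nth 0 l j < k.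
  by move=> j; apply: (allP al); apply: mem_nth; rewrite sz.
have iK : forall j : 'I_k, val (insubd j (nth 0 l j) : 'I_k) = nth 0 l j.
  by move=> j; rewrite insubdK //; exact: lt.
have inj : injective (lp_fun k l).
  move=> x y /(congr1 val); rewrite /lp_fun !iK.
  move/eqP; rewrite nth_uniq ?sz // => /eqP; exact: val_inj.
rewrite /lp permE /lp_f; case: injectiveP => // _.
by rewrite /lp_fun iK.
Qed.

Lemma lp_eq k l (s : {perm 'I_k}) : valid k l ->
  (forall i : 'I_k, val (s i) = nth 0 l i) -> s = lp k l.
Proof. by move=> v H; apply/permP => i; apply: val_inj; rewrite H lpE. Qed.

Lemma lpM k l1 l2 : valid k l1 -> valid k l2 ->
  valid k (map (nth 0 l2) l1) -> lp k l1 * lp k l2 = lp k (map (nth 0 l2) l1).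
Proof.
move=> v1 v2 v3; apply: lp_eq => // i; rewrite permM lpE // lpE //.
case/andP: (v1) => /andP[/eqP sz _] _.
by rewrite (nth_map 0) // sz.
Qed.

Lemma lp1 k : 1 = lp k (iota 0 k).
Proof.
apply: lp_eq; first by rewrite /valid size_iota eqxx iota_uniq; apply/allP=> x; rewrite mem_iota.
by move=> i; rewrite perm1 nth_iota.
Qed.

Lemma tensor_lo k l (s : {perm 'I_k}) (t : {perm 'I_l}) (j : 'I_k) :
  tensor s t (lshift l j) = lshift l (s j).
Proof. by rewrite /tensor permE /tensor_fun (unsplitK (inl _ j)). Qed.
Lemma tensor_hi k l (s : {perm 'I_k}) (t : {perm 'I_l}) (j : 'I_l) :
  tensor s t (rshift k j) = rshift k (t j).
Proof. by rewrite /tensor permE /tensor_fun (unsplitK (inr _ j)). Qed.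

Lemma lpT k m l1 l2 : valid k l1 -> valid m l2 ->
  valid (k + m) (l1 ++ map (addn k) l2) ->
  tensor (lp k l1) (lp m l2) = lp (k + m) (l1 ++ map (addn k) l2).
Proof.
move=> v1 v2 v3; apply: lp_eq => // i.
case/andP: (v1) => /andP[/eqP sz1 _] _; case/andP: (v2) => /andP[/eqP sz2 _] _.
case: (split_ordP i) => j ->.
  by rewrite tensor_lo /= lpE // nth_cat sz1 ltn_ord.
rewrite tensor_hi /= lpE // nth_cat sz1 ltnNge leq_addr /= addKn.
by rewrite (nth_map 0) // sz2.
Qed.

Local Open Scope group_scope.

Definition dl n (l : seq nat) i :=
  mkseq (fun j => let p := if j < i then j else j.+2 in
                  let q := nth 0 l p in
                  let m := minn (nth 0 l i) (nth 0 l i.+1) in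
                  if q < m then q else q - 2) n.

Lemma lpD n l i : valid n.+2 l -> i.+1 < n.+2 -> valid n (dl n l i) ->
  del (lp n.+2 l) i = lp n (dl n l i).
Proof.
move=> v hi vd.
have E : forall j : 'I_n, del_raw (lp n.+2 l) i j = lp n (dl n l i) j.
  move=> j; have jn := ltn_ord j.
  apply: val_inj; rewrite /del_raw /= !lpE // !inordK; try (by case: ifP => _; lia); try lia.
  rewrite nth_mkseq //= insubdK //.
  case/andP: vd => /andP[/eqP sz _] al.
  have := allP al _ (@mem_nth _ 0 (dl n l i) j _); rewrite sz nth_mkseq //=.
  by apply.
apply/permP => j; rewrite /del permE /del_fun.
have -> : injectiveb (del_raw (lp n.+2 l) i).
  by apply/injectiveP; apply: (eq_inj (@perm_inj _ (lp n (dl n l i)))) => x; rewrite E.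
by rewrite E.
Qed.

Local Open Scope group_scope.

Inductive step := SI of nat | SM of nat & nat | ST of nat & nat | SD of nat & nat.
Definition fact := (nat * seq nat)%type.
Definition df : fact := (0, [::]).
Definition adj (l : seq nat) i :=
  (nth 0 l i.+1 == (nth 0 l i).+1) || ((nth 0 l i.+1).+1 == nth 0 l i).
Definition app_step (fs : seq fact) st : option fact :=
  match st with
  | SI k => Some (k, iota 0 k)
  | SM a b => let fa := nth df fs a in let fb := nth df fs b in
      if fa.1 == fb.1 then Some (fa.1, map (nth 0 fb.2) fa.2) else None
  | ST a b => let fa := nth df fs a in let fb := nth df fs b in
      Some (fa.1 + fb.1, fa.2 ++ map (addn fa.1) fb.2)
  | SD a i => let fa := nth df fs a in
      match fa.1 with
      | n.+2 => if (i.+1 < n.+2) && adj fa.2 i then Some (n, dl n fa.2 i) else None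
      | _ => None
      end
  end.
Fixpoint run (fs : seq fact) sts := match sts with
  | [::] => Some fs
  | st :: r => match app_step fs st with
     | Some f => if valid f.1 f.2 then run (rcons fs f) r else None
     | None => None end end.

Definition Inv (G : forall k, {group {perm 'I_k}}) (fs : seq fact) :=
  forall f, f \in fs -> valid f.1 f.2 /\ lp f.1 f.2 \in G f.1.

Lemma lp0 l : lp 0 l = 1.
Proof. by apply/permP => -[]. Qed.

Lemma inv_nth G fs a : Inv G fs ->
  valid (nth df fs a).1 (nth df fs a).2 /\ lp (nth df fs a).1 (nth df fs a).2 \in G (nth df fs a).1.
Proof.
move=> I; case: (ltnP a (size fs)) => h; first by apply: I; apply: mem_nth.
by rewrite nth_default //= lp0 group1.
Qed.

Lemma step_ok G fs st f : filtered G -> weakly_saturated G -> Inv G fs ->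
  app_step fs st = Some f -> valid f.1 f.2 -> lp f.1 f.2 \in G f.1.
Proof.
move=> fG wG I; case: st => [k|a b|a b|a i] /=.
- by case=> <- /= _; rewrite -lp1 group1.
- have [va ma] := @inv_nth _ _ a I; have [vb mb] := @inv_nth _ _ b I.
  move: va ma vb mb; case: (nth df fs a) => ka la; case: (nth df fs b) => kb lb /=.
  case: eqP => // <- va ma vb mb [<-] /= vf.
  by rewrite -lpM // groupM.
- have [va ma] := @inv_nth _ _ a I; have [vb mb] := @inv_nth _ _ b I.
  move: va ma vb mb; case: (nth df fs a) => ka la; case: (nth df fs b) => kb lb /=.
  move=> va ma vb mb [<-] /= vf.
  by rewrite -lpT //; apply: fG.
- have [va ma] := @inv_nth _ _ a I.
  move: va ma; case: (nth df fs a) => ka la /=.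
  case: ka => [|[|n]] // va ma.
  case: ifP => // /andP[hi ad] [<-] /= vf.
  rewrite -lpD //; apply: wG => //.
  rewrite !lpE // !inordK //; try lia.
  by case/orP: ad => /eqP ->; [left|right].
Qed.

Lemma run_ok G sts : filtered G -> weakly_saturated G ->
  forall fs fs', Inv G fs -> run fs sts = Some fs' -> Inv G fs'.
Proof.
move=> fG wG; elim: sts => [|st r IH] fs fs' I /=; first by case=> <-.
case E: (app_step fs st) => [f|] //; case: ifP => // vf.
apply: IH => g; rewrite mem_rcons inE => /orP[/eqP ->|]; last exact: I.
by split=> //; apply: step_ok E vf.
Qed.

Definition check (l : seq nat) (c : seq step) :=
  match run [:: (5, l)] c with
  | Some fs => ((2, [:: 1; 0]%N) \in fs) || ((3, [:: 2; 1; 0]%N) \in fs)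
  | None => false end.

Lemma check_ok G l c : filtered G -> weakly_saturated G -> valid 5 l ->
  lp 5 l \in G 5 -> check l c ->
  lp 2 [:: 1; 0]%N \in G 2 \/ lp 3 [:: 2; 1; 0]%N \in G 3.
Proof.
move=> fG wG v m; rewrite /check; case E: run => [fs|] //.
have I : Inv G fs.
  apply: (@run_ok G c fG wG _ _ _ E) => f; rewrite inE => /eqP -> //.
by case/orP => /I [] _ h; [left|right].
Qed.

Local Close Scope group_scope.


Definition certs : seq (seq nat * seq step) := [::
  ([:: 0; 1; 2; 4; 3], [:: SI 1; SD 0 0; ST 1 2; SD 3 0]);
  ([:: 0; 1; 3; 2; 4], [:: SI 1; ST 0 1; SD 2 0; SD 3 2]);
  ([:: 0; 1; 3; 4; 2], [:: SI 1; SD 0 0; ST 1 2; ST 0 1; SD 4 0; SM 3 5; SD 6 0]);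
  ([:: 0; 1; 4; 2; 3], [:: SI 1; ST 0 1; ST 1 0; SM 2 3; SD 4 0; SD 5 0]);
  ([:: 0; 1; 4; 3; 2], [:: SD 0 0]);
  ([:: 0; 2; 1; 3; 4], [:: SI 1; SD 0 3; ST 1 2; SD 3 0]);
  ([:: 0; 2; 1; 4; 3], [:: SI 1; SD 0 1; ST 1 2; SD 3 0]);
  ([:: 0; 2; 3; 1; 4], [:: SI 1; ST 0 1; SD 2 4; ST 1 0; SD 4 0; SM 3 5; SD 6 0]);
  ([:: 0; 2; 3; 4; 1], [:: SI 1; SD 0 1; ST 1 2; SD 3 0]);
  ([:: 0; 2; 4; 1; 3], [:: SI 1; SM 0 0; SD 2 1; ST 1 3; SD 4 0]);
  ([:: 0; 2; 4; 3; 1], [:: SI 1; SD 0 2; ST 1 2; SD 3 0]);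
  ([:: 0; 3; 1; 2; 4], [:: SI 1; ST 1 0; SD 2 0; ST 0 1; SD 4 4; SM 3 5; SD 6 0]);
  ([:: 0; 3; 1; 4; 2], [:: SI 1; SM 0 0; SD 2 1; ST 1 3; SD 4 0]);
  ([:: 0; 3; 2; 1; 4], [:: SI 1; ST 0 1; SD 2 4; ST 1 3; SD 4 0]);
  ([:: 0; 3; 2; 4; 1], [:: SI 1; SD 0 1; ST 1 2; SD 3 0]);
  ([:: 0; 3; 4; 1; 2], [:: SI 1; ST 1 0; SD 2 0; ST 3 1; SM 0 4; SD 5 0]);
  ([:: 0; 3; 4; 2; 1], [:: SI 1; SD 0 1; ST 1 2; SD 3 0]);
  ([:: 0; 4; 1; 2; 3], [:: SI 1; SD 0 2; ST 1 2; SD 3 0]);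
  ([:: 0; 4; 1; 3; 2], [:: SI 1; SD 0 3; ST 1 2; SD 3 0]);
  ([:: 0; 4; 2; 1; 3], [:: SI 1; SD 0 2; ST 1 2; SD 3 0]);
  ([:: 0; 4; 2; 3; 1], [:: SI 1; SD 0 2; ST 1 2; SD 3 0]);
  ([:: 0; 4; 3; 1; 2], [:: SI 1; SD 0 3; ST 1 2; SD 3 0]);
  ([:: 0; 4; 3; 2; 1], [:: SI 1; SD 0 1; ST 1 2; SD 3 0]);
  ([:: 1; 0; 2; 3; 4], [:: SI 1; ST 0 1; SD 2 2; SD 3 2]);
  ([:: 1; 0; 2; 4; 3], [:: SI 1; SD 0 0; ST 1 2; SD 3 0]);
  ([:: 1; 0; 3; 2; 4], [:: SI 1; ST 0 1; SD 2 0; SD 3 2]);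
  ([:: 1; 0; 3; 4; 2], [:: SD 0 2; SD 0 0; SM 1 2]);
  ([:: 1; 0; 4; 2; 3], [:: SD 0 0; SD 0 3; SM 1 2]);
  ([:: 1; 0; 4; 3; 2], [:: SD 0 0]);
  ([:: 1; 2; 0; 3; 4], [:: SI 1; SD 0 3; ST 1 2; ST 0 1; SD 4 3; SM 3 5; SD 6 0]);
  ([:: 1; 2; 0; 4; 3], [:: SD 0 3; SD 0 0; SM 1 2]);
  ([:: 1; 2; 3; 0; 4], [:: SI 1; ST 0 1; SD 2 0; SD 3 2]);
  ([:: 1; 2; 3; 4; 0], [:: SI 1; SD 0 0; ST 1 2; ST 0 1; SD 4 0; SM 3 5; SD 6 0]);
  ([:: 1; 2; 4; 0; 3], [:: SM 0 0; SD 1 1]);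
  ([:: 1; 2; 4; 3; 0], [:: SD 0 0]);
  ([:: 1; 3; 0; 2; 4], [:: SM 0 0; SI 1; ST 1 2; SD 3 0; SD 4 2]);
  ([:: 1; 3; 0; 4; 2], [:: SI 1; ST 1 0; ST 0 1; SM 2 3; SD 4 0; SD 5 0]);
  ([:: 1; 3; 2; 0; 4], [:: SI 1; ST 0 1; SD 2 1; SD 3 2]);
  ([:: 1; 3; 2; 4; 0], [:: SI 1; SD 0 1; ST 1 2; ST 0 1; SD 4 1; SM 3 5; SD 6 0]);
  ([:: 1; 3; 4; 0; 2], [:: SI 1; ST 0 1; SD 2 1; SD 3 2]);
  ([:: 1; 3; 4; 2; 0], [:: SD 0 1; SM 0 0; SD 2 0; SM 1 3]);
  ([:: 1; 4; 0; 2; 3], [:: SM 0 0; SD 1 2]);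
  ([:: 1; 4; 0; 3; 2], [:: SM 0 0; SD 1 1]);
  ([:: 1; 4; 2; 0; 3], [:: SM 0 0; SD 1 0]);
  ([:: 1; 4; 2; 3; 0], [:: SI 1; SD 0 2; ST 1 2; ST 0 1; SD 4 2; SM 3 5; SD 6 0]);
  ([:: 1; 4; 3; 0; 2], [:: SI 1; ST 0 1; SD 2 1; SD 3 2]);
  ([:: 1; 4; 3; 2; 0], [:: SI 1; SD 0 1; ST 1 2; ST 0 1; SD 4 1; SM 3 5; SD 6 0]);
  ([:: 2; 0; 1; 3; 4], [:: SI 1; ST 0 1; ST 1 0; SM 2 3; SD 4 0; SD 5 2]);
  ([:: 2; 0; 1; 4; 3], [:: SD 0 1; SD 0 3; SM 1 2]);
  ([:: 2; 0; 3; 1; 4], [:: SM 0 0; SI 1; ST 1 2; SD 3 0; SD 4 2]);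
  ([:: 2; 0; 3; 4; 1], [:: SM 0 0; SD 1 0]);
  ([:: 2; 0; 4; 1; 3], [:: SI 1; ST 0 1; ST 1 0; SM 2 3; SD 4 0; SD 5 0]);
  ([:: 2; 0; 4; 3; 1], [:: SM 0 0; SD 1 1]);
  ([:: 2; 1; 0; 3; 4], [:: SD 0 3]);
  ([:: 2; 1; 0; 4; 3], [:: SD 0 3]);
  ([:: 2; 1; 3; 0; 4], [:: SI 1; ST 0 1; SD 2 0; SD 3 2]);
  ([:: 2; 1; 3; 4; 0], [:: SD 0 2]);
  ([:: 2; 1; 4; 0; 3], [:: SM 0 0; SD 1 2]);
  ([:: 2; 1; 4; 3; 0], [:: SD 0 0]);
  ([:: 2; 3; 0; 1; 4], [:: SI 1; ST 0 1; SD 2 4; ST 1 3; SM 0 4; SD 5 1]);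
  ([:: 2; 3; 0; 4; 1], [:: SI 1; SD 0 0; ST 1 2; SD 3 0]);
  ([:: 2; 3; 1; 0; 4], [:: SI 1; ST 0 1; SD 2 0; SD 3 2]);
  ([:: 2; 3; 1; 4; 0], [:: SM 0 0; SD 1 1; SD 0 0; SM 2 3]);
  ([:: 2; 3; 4; 0; 1], [:: SI 1; ST 0 1; ST 1 0; SM 2 3; SD 4 0; SD 5 0]);
  ([:: 2; 3; 4; 1; 0], [:: SD 0 0]);
  ([:: 2; 4; 0; 1; 3], [:: SI 1; SD 0 2; ST 1 2; SD 3 0]);
  ([:: 2; 4; 0; 3; 1], [:: SI 1; ST 0 1; ST 1 0; SM 2 3; SD 4 0; SD 5 0]);
  ([:: 2; 4; 1; 0; 3], [:: SI 1; SD 0 2; ST 1 2; SD 3 0]);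
  ([:: 2; 4; 1; 3; 0], [:: SM 0 0; SD 1 0]);
  ([:: 2; 4; 3; 0; 1], [:: SD 0 3; SD 0 1; SM 1 2]);
  ([:: 2; 4; 3; 1; 0], [:: SD 0 1]);
  ([:: 3; 0; 1; 2; 4], [:: SI 1; ST 0 1; SD 2 1; SD 3 2]);
  ([:: 3; 0; 1; 4; 2], [:: SM 0 0; SD 1 3]);
  ([:: 3; 0; 2; 1; 4], [:: SI 1; ST 0 1; SD 2 2; SD 3 2]);
  ([:: 3; 0; 2; 4; 1], [:: SM 0 0; SD 1 0]);
  ([:: 3; 0; 4; 1; 2], [:: SI 1; ST 0 1; SD 2 3; SD 3 2]);
  ([:: 3; 0; 4; 2; 1], [:: SI 1; ST 0 1; SD 2 3; SD 3 2]);
  ([:: 3; 1; 0; 2; 4], [:: SI 1; ST 0 1; SD 2 1; SD 3 2]);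
  ([:: 3; 1; 0; 4; 2], [:: SM 0 0; SD 1 2]);
  ([:: 3; 1; 2; 0; 4], [:: SI 1; ST 0 1; SD 2 1; SD 3 2]);
  ([:: 3; 1; 2; 4; 0], [:: SI 1; SD 0 1; ST 1 2; ST 0 1; SD 4 1; SM 3 5; SD 6 0]);
  ([:: 3; 1; 4; 0; 2], [:: SI 1; ST 0 1; ST 1 0; SM 2 3; SD 4 0; SD 5 2]);
  ([:: 3; 1; 4; 2; 0], [:: SM 0 0; SD 1 3]);
  ([:: 3; 2; 0; 1; 4], [:: SI 1; ST 0 1; SD 2 2; SD 3 2]);
  ([:: 3; 2; 0; 4; 1], [:: SI 1; SD 0 0; ST 1 2; SD 3 0]);
  ([:: 3; 2; 1; 0; 4], [:: SI 1; ST 0 1; SD 2 0; SD 3 2]);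
  ([:: 3; 2; 1; 4; 0], [:: SI 1; SD 0 0; ST 1 2; ST 0 1; SD 4 0; SM 3 5; SD 6 0]);
  ([:: 3; 2; 4; 0; 1], [:: SD 0 0; SD 0 3; SM 1 2]);
  ([:: 3; 2; 4; 1; 0], [:: SD 0 0]);
  ([:: 3; 4; 0; 1; 2], [:: SI 1; SD 0 2; ST 1 2; ST 0 1; SD 4 2; SM 3 5; SD 6 0]);
  ([:: 3; 4; 0; 2; 1], [:: SD 0 3; SD 0 0; SM 1 2]);
  ([:: 3; 4; 1; 0; 2], [:: SD 0 0; SD 0 2; SM 1 2]);
  ([:: 3; 4; 1; 2; 0], [:: SI 1; SD 0 0; ST 1 2; ST 0 1; SD 4 0; SM 3 5; SD 6 0]);
  ([:: 3; 4; 2; 0; 1], [:: SI 1; SD 0 0; ST 1 2; ST 0 1; SD 4 3; SM 3 5; SD 6 1]);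
  ([:: 3; 4; 2; 1; 0], [:: SD 0 0]);
  ([:: 4; 0; 1; 2; 3], [:: SI 1; ST 0 1; ST 1 0; SM 2 3; SD 4 3; SD 5 0]);
  ([:: 4; 0; 1; 3; 2], [:: SD 0 1]);
  ([:: 4; 0; 2; 1; 3], [:: SI 1; ST 0 1; SD 2 2; SD 0 2; ST 1 4; SM 3 5; SD 6 0]);
  ([:: 4; 0; 2; 3; 1], [:: SI 1; ST 0 1; ST 1 0; SM 2 3; SD 4 1; SD 5 0]);
  ([:: 4; 0; 3; 1; 2], [:: SM 0 0; SD 1 2; SD 0 3; SM 2 3]);
  ([:: 4; 0; 3; 2; 1], [:: SI 1; ST 0 1; SD 2 2; SD 0 2; ST 1 4; SM 3 5; SD 6 0]);
  ([:: 4; 1; 0; 2; 3], [:: SD 0 3]);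
  ([:: 4; 1; 0; 3; 2], [:: SD 0 1]);
  ([:: 4; 1; 2; 0; 3], [:: SI 1; ST 0 1; ST 1 0; SM 2 3; SD 4 4; SD 5 1]);
  ([:: 4; 1; 2; 3; 0], [:: SD 0 1]);
  ([:: 4; 1; 3; 0; 2], [:: SM 0 0; SD 1 3]);
  ([:: 4; 1; 3; 2; 0], [:: SD 0 2]);
  ([:: 4; 2; 0; 1; 3], [:: SD 0 2; SM 0 0; SD 2 3; SM 1 3]);
  ([:: 4; 2; 0; 3; 1], [:: SM 0 0; SD 1 0]);
  ([:: 4; 2; 1; 0; 3], [:: SI 1; ST 0 1; SD 2 1; SD 0 1; ST 1 4; SM 3 5; SD 6 0]);
  ([:: 4; 2; 1; 3; 0], [:: SD 0 1]);
  ([:: 4; 2; 3; 0; 1], [:: SI 1; ST 0 1; ST 1 0; SM 2 3; SD 4 1; SD 5 0]);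
  ([:: 4; 2; 3; 1; 0], [:: SD 0 1]);
  ([:: 4; 3; 0; 1; 2], [:: SD 0 2]);
  ([:: 4; 3; 0; 2; 1], [:: SD 0 3]);
  ([:: 4; 3; 1; 0; 2], [:: SD 0 2]);
  ([:: 4; 3; 1; 2; 0], [:: SD 0 2]);
  ([:: 4; 3; 2; 0; 1], [:: SD 0 3]);
  ([:: 4; 3; 2; 1; 0], [:: SD 0 0])].

Definition cert (l : seq nat) := (nth ([::], [::]) certs (find (fun p => p.1 == l) certs)).2.

Lemma all_certs : all (fun l => (l == iota 0 5) || check l (cert l)) (permutations (iota 0 5)).
Proof. vm_compute. reflexivity. Qed.

Local Open Scope group_scope.

Definition gr k (s : {perm 'I_k}) := [seq val (s i) | i <- enum 'I_k].
Arguments gr {k}.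

Lemma gr_valid k (s : {perm 'I_k}) : valid k (gr s).
Proof.
rewrite /valid size_map size_enum_ord eqxx /=.
rewrite map_inj_uniq ?enum_uniq /=; last by move=> x y /val_inj /perm_inj.
by apply/allP => x; rewrite /gr => /mapP [i _ ->]; exact: ltn_ord.
Qed.

Arguments gr_valid {k}.
Lemma gr_lp k (s : {perm 'I_k}) : s = lp k (gr s).
Proof.
apply: lp_eq; first exact: gr_valid.
by move=> i; rewrite /gr (nth_map i) ?nth_ord_enum // size_enum_ord.
Qed.

Arguments gr_lp {k}.
Lemma step1 G (s : {perm 'I_5}) : filtered G -> weakly_saturated G ->
  s \in G 5 -> s != 1 ->
  lp 2 [:: 1; 0]%N \in G 2 \/ lp 3 [:: 2; 1; 0]%N \in G 3.
Proof.
move=> fG wG m ne.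
have v := gr_valid s.
have P : gr s \in permutations (iota 0 5).
  have uq : uniq (gr s) by case/andP: v => /andP[].
  rewrite mem_permutations; apply: uniq_perm => //.
  move=> x; rewrite mem_iota /=; apply/idP/idP.
    by case/andP: v => _ /allP al /al.
  move=> hx; apply/mapP; exists (s^-1 (Ordinal hx)); rewrite ?mem_enum //.
  by rewrite permKV.
have := allP all_certs _ P; case: eqP => [E|_] /=.
  by case/eqP: ne; rewrite (gr_lp s) E -lp1.
by apply: check_ok => //; rewrite -gr_lp.
Qed.

Local Open Scope group_scope.

Lemma tpermv k (x y z : 'I_k) : nat_of_ord (tperm x y z) =
  if nat_of_ord z == x then nat_of_ord y else if nat_of_ord z == y then nat_of_ord x else z.
Proof.
case: (eqVneq z x) => [->|nx]; first by rewrite tpermL eqxx.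
rewrite val_eqE (negbTE nx).
case: (eqVneq z y) => [->|ny]; first by rewrite tpermR eqxx.
by rewrite val_eqE (negbTE ny) tpermD // eq_sym.
Qed.

Lemma shift_tperm G d (t : {perm 'I_d.+2}) : filtered G -> t \in G d.+2 ->
  (forall z : 'I_d.+2, nat_of_ord (t z) = if nat_of_ord z == 0 then d.+1 else if nat_of_ord z == d.+1 then 0 else z) ->
  forall k (x y : 'I_k), nat_of_ord y = x + d.+1 -> tperm x y \in G k.
Proof.
move=> fG tG Ht k x y hy.
have [a ha] : exists a, nat_of_ord x = a by eauto.
have [b hb] : exists b, k = a + d.+2 + b by exists (k - a - d.+2); have := ltn_ord y; lia.
subst k.
have uG : tensor (tensor (1 : {perm 'I_a}) t) (1 : {perm 'I_b}) \in G (a + d.+2 + b).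
  by apply: (fG); [apply: (fG) => //; exact: group1 | exact: group1].
suff -> : tperm x y = tensor (tensor (1 : {perm 'I_a}) t) (1 : {perm 'I_b}) by [].
apply/permP => z; apply: ord_inj; rewrite tpermv.
case: (split_ordP z) => z1 ->.
  rewrite tensor_lo /=.
  case: (split_ordP z1) => w ->.
    rewrite tensor_lo perm1 /=; have := ltn_ord w.
    by repeat case: eqP => ?; try lia.
  rewrite tensor_hi /= Ht; have := ltn_ord w.
  by repeat case: eqP => ?; try lia.
rewrite tensor_hi perm1 /=; have := ltn_ord z1.
by repeat case: eqP => ?; try lia.
Qed.

Lemma chain k (H : {group {perm 'I_k}}) c :
  (forall x y : 'I_k, nat_of_ord y = x + c.+1 -> tperm x y \in H) ->
  forall n (x y : 'I_k), nat_of_ord y = x + n.+1 * c.+1 -> tperm x y \in H.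
Proof.
move=> Hc; elim=> [|n IH] x y hy; first by apply: Hc; lia.
have hy' : x + n.+1 * c.+1 < k by have := ltn_ord y; lia.
pose y' := Ordinal hy'.
have n1 : y' != x by rewrite -val_eqE /=; lia.
have n2 : y != x by rewrite -val_eqE /=; lia.
have -> : tperm x y = (tperm x y') ^ (tperm y' y) by rewrite tpermJ tpermL tpermD.
rewrite groupJ //; first by apply: IH.
by apply: Hc => /=; lia.
Qed.

Lemma tperm_all k (H : {group {perm 'I_k}}) :
  (forall x y : 'I_k, nat_of_ord y = x + 1 -> tperm x y \in H) ->
  forall x y : 'I_k, tperm x y \in H.
Proof.
move=> Hc.
have L : forall x y : 'I_k, x < y -> tperm x y \in H.
  move=> x y lt; apply: (@chain _ _ _ Hc (y - x).-1 x y); lia.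
move=> x y; case: (ltngtP x y) => h; first exact: L.
  by rewrite tpermC; apply: L.
by rewrite (ord_inj h) tperm1 group1.
Qed.

Lemma tperm_par k (H : {group {perm 'I_k}}) :
  (forall x y : 'I_k, nat_of_ord y = x + 2 -> tperm x y \in H) ->
  forall x y : 'I_k, odd x = odd y -> tperm x y \in H.
Proof.
move=> Hc.
have L : forall x y : 'I_k, x < y -> odd x = odd y -> tperm x y \in H.
  move=> x y lt od.
  have ev : ~~ odd (y - x) by rewrite oddB ?od ?addbb //; exact: ltnW.
  have e := odd_double_half (y - x); rewrite (negbTE ev) add0n -muln2 in e.
  move: e; move: ((y - x)./2) => h e; clear ev od.
  have hp : 0 < h by case: h e => //= e; lia.
  apply: (@chain _ _ _ Hc h.-1 x y); rewrite prednK //; lia.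
move=> x y od; case: (ltngtP x y) => h; first exact: L.
  by rewrite tpermC; apply: L.
by rewrite (ord_inj h) tperm1 group1.
Qed.

Lemma setT_of_tperm k (H : {group {perm 'I_k}}) :
  (forall x y : 'I_k, tperm x y \in H) -> (H : {set {perm 'I_k}}) = [set: {perm 'I_k}].
Proof.
move=> Ht; apply/eqP; rewrite eqEsubset subsetT /=; apply/subsetP => s _.
have [ts -> _] := prod_tpermP s; apply: group_prod => t _; exact: Ht.
Qed.

Lemma starP k (s : {perm 'I_k}) : reflect (forall z, odd (s z) = odd z) (s \in Sstar k).
Proof.
rewrite inE; apply: (iffP forallP) => h z; first exact/eqP.
by rewrite h.
Qed.

Lemma star_of_tperm k (H : {group {perm 'I_k}}) :
  (forall x y : 'I_k, odd x = odd y -> tperm x y \in H) -> Sstar k \subset H.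
Proof.
move=> Ht; apply/subsetP => s.
have [n] := ubnP #|[pred x | s x != x]|; elim: n s => // n IHn s /ltnSE-le_s_n /starP sS.
case: (pickP (fun x => s x != x)) => [x s_x | s_id]; last first.
  have -> : s = 1 by apply/permP => x; apply/eqP/idPn; rewrite perm1 s_id.
  exact: group1.
have od : odd x = odd (s^-1 x) by rewrite -{1}(permKV s x) sS.
have -> : s = tperm x (s^-1 x) * (tperm x (s^-1 x) * s) by rewrite mulgA tperm2 mul1g.
rewrite groupM ?Ht //; apply: IHn; last first.
  apply/starP => z; rewrite permM sS.
  by case: tpermP => [->|->|].
rewrite (cardD1 x) !inE s_x in le_s_n; apply: leq_ltn_trans le_s_n.
apply: subset_leq_card; apply/subsetP=> y.
rewrite !inE permM permE /= -(canF_eq (permK _)).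
have [-> | ne_yx] := eqVneq y x; first by rewrite permKV eqxx.
by case: (s y =P x) => // -> _; rewrite eq_sym.
Qed.

Local Open Scope group_scope.

Lemma fullS G : filtered G -> lp 2 [:: 1; 0]%N \in G 2 ->
  forall k, (G k : {set {perm 'I_k}}) = [set: {perm 'I_k}].
Proof.
move=> fG h k; apply: setT_of_tperm; apply: tperm_all => x y hy.
apply: (@shift_tperm G 0 (lp 2 [:: 1; 0]%N)) => // z.
by rewrite lpE //; case: z => [[|[|]] hz].
Qed.

Lemma starS G : filtered G -> lp 3 [:: 2; 1; 0]%N \in G 3 ->
  forall k, Sstar k \subset G k.
Proof.
move=> fG h k; apply: star_of_tperm; apply: tperm_par => x y hy.
apply: (@shift_tperm G 1 (lp 3 [:: 2; 1; 0]%N)) => // z.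
by rewrite lpE //; case: z => [[|[|[|]]] hz].
Qed.

Definition PP (G : forall k, {group {perm 'I_k}}) K :=
  exists x y : 'I_K, [/\ nat_of_ord x = 0%N, nat_of_ord y = 1%N & tperm x y \in G K].

Lemma P_up G K : filtered G -> PP G K -> PP G (K + 1).
Proof.
move=> fG [x [y [hx hy m]]].
have K2 : 1 < K by have := ltn_ord y; lia.
exists (lshift 1 x), (lshift 1 y); split => //.
have -> : tperm (lshift 1 x) (lshift 1 y) = tensor (tperm x y) (1 : {perm 'I_1}).
  apply/permP => z; apply: ord_inj; rewrite tpermv /=.
  case: (split_ordP z) => w ->.
    by rewrite tensor_lo /= tpermv.
  rewrite tensor_hi perm1 /=; have := ltn_ord w.
  by repeat case: eqP => ?; try lia.
by apply: fG => //; exact: group1.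
Qed.

Lemma del_eq n (s : {perm 'I_n.+2}) i (g : {perm 'I_n}) : del_raw s i =1 g -> del s i = g.
Proof.
move=> E; apply/permP => j; rewrite /del permE /del_fun.
have -> : injectiveb (del_raw s i).
  by apply/injectiveP; apply: (eq_inj (@perm_inj _ g)) => x; rewrite E.
by rewrite E.
Qed.

Lemma P_down G n : weakly_saturated G -> PP G n.+4 -> PP G n.+2.
Proof.
move=> wG [x [y [hx hy m]]].
exists (inord 0), (inord 1); split; rewrite ?inordK //.
have <- : del (tperm x y) n.+2 = tperm (inord 0%N) (inord 1%N).
  apply: del_eq => j; apply: ord_inj; have jn := ltn_ord j.
  rewrite /del_raw /= !tpermv !inordK ?hx ?hy //; try lia.
  rewrite jn insubdK; last first.
    by rewrite unfold_in /=; repeat case: ifP => ?; try lia.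
  have -> : (minn (if n.+2 == 0 then 1 else if n.+2 == 1 then 0 else n.+2)
      (if n.+3 == 0 then 1 else if n.+3 == 1 then 0 else n.+3) = n.+2)%N by apply/minn_idPl.
  case: (nat_of_ord j) jn => [|[|j']] /= jn //; case: ifP => //; lia.
  by rewrite jn; lia.
apply: (wG n.+2 (tperm x y) n.+2 m) => //; left.
change (nat_of_ord (tperm x y (inord n.+3)) = (nat_of_ord (tperm x y (inord n.+2))).+1).
by rewrite !tpermv !inordK ?hx ?hy.
Qed.

Local Open Scope group_scope.

Lemma P_to2 G K : filtered G -> weakly_saturated G -> 1 < K -> PP G K -> PP G 2.
Proof.
move=> fG wG; elim/ltn_ind: K => K IH hK P.
case: K IH hK P => [|[|[|[|n]]]] IH hK P //.
  by apply: (@P_down G 0 wG); exact: (@P_up G 3 fG P).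
apply: (IH n.+2) => //; exact: P_down.
Qed.

Lemma PP_lp (G : forall k, {group {perm 'I_k}}) : PP G 2 -> lp 2 [:: 1; 0]%N \in G 2.
Proof.
case=> x [y [hx hy m]].
have -> : lp 2 [:: 1; 0]%N = tperm x y.
  symmetry; apply: lp_eq => // i; change (nat_of_ord (tperm x y i) = nth 0 [:: 1; 0] i)%N; rewrite tpermv hx hy.
  by case: i => [[|[|]] hi].
exact: m.
Qed.

Lemma tperm_star k (x y : 'I_k) : odd x = odd y -> tperm x y \in Sstar k.
Proof. by move=> h; apply/starP => z; case: tpermP => [->|->|]. Qed.

Lemma tp01 (G : forall k, {group {perm 'I_k}}) K (u v : 'I_K) : Sstar K \subset G K -> odd u != odd v ->
  tperm u v \in G K -> PP G K.
Proof.
move=> S.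
wlog hu : u v / ~~ odd u => [W|].
  move=> d m; case h: (odd u); last exact: (W u v (negbT h) d m).
  apply: (W v u).
  - by move: d; rewrite h; case: (odd v).
  - by rewrite eq_sym.
  - by rewrite tpermC.
move=> d m; have hv : odd v by move: d hu; case: (odd u); case: (odd v).
have K1 : 1 < K by have := ltn_ord v; case: (nat_of_ord v) hv => //; lia.
pose x0 : 'I_K := Ordinal (ltnW K1); pose x1 : 'I_K := Ordinal K1.
have vx0 : v != x0 by apply/eqP => e; move: hv; rewrite e.
have ux0 : odd u = odd x0 by rewrite /= (negbTE hu).
have m0 : tperm x0 v \in G K.
  have -> : tperm x0 v = (tperm u v) ^ (tperm u x0).
    rewrite tpermJ tpermL tpermD //; last by rewrite eq_sym.
    by apply/eqP => e; move: d; rewrite e eqxx.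
  by rewrite groupJ //; apply: (subsetP S); apply: tperm_star.
exists x0, x1; split => //.
have -> : tperm x0 x1 = (tperm x0 v) ^ (tperm v x1).
  by rewrite tpermJ tpermL tpermD // eq_sym.
by rewrite groupJ //; apply: (subsetP S); apply: tperm_star; rewrite hv.
Qed.

Lemma caseB (G : forall k, {group {perm 'I_k}}) k (s : {perm 'I_k}) : filtered G -> (forall k, Sstar k \subset G k) ->
  s \in G k -> s \notin Sstar k -> PP G (k + 2).
Proof.
move=> fG S sG ns.
have [r hr] : exists r, odd (s r) != odd r.
  move: ns; rewrite inE negb_forall => /existsP [r hr]; by exists r.
have tG : tensor s (1 : {perm 'I_2}) \in G (k + 2) by apply: fG => //; exact: group1.
pose e : 'I_2 := if odd r == odd k then ord0 else ord_max.
pose c := rshift k e.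
have hc : odd c = odd r.
  rewrite /= oddD /e; case: eqP => [->|]; first by rewrite addbF.
  by case: (odd r); case: (odd k).
have m : tperm (lshift 2 r) c \in G (k + 2).
  by apply: (subsetP (S _)); apply: tperm_star; rewrite hc.
have m2 : tperm (lshift 2 (s r)) c \in G (k + 2).
  have -> : tperm (lshift 2 (s r)) c = (tperm (lshift 2 r) c) ^ (tensor s 1).
    by rewrite tpermJ tensor_lo /c tensor_hi perm1.
  by rewrite groupJ.
apply: (@tp01 G (k + 2) _ _ (S _) _ m2); by rewrite /= hc.
Qed.

Local Close Scope group_scope.

Theorem proposition2p4 (G : forall k, {group {perm 'I_k}}) :
  filtered G -> weakly_saturated G ->
  (G 5 : {set {perm 'I_5}}) != 1%g ->
  (forall k, (G k : {set {perm 'I_k}}) = [set: {perm 'I_k}]) \/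
  (forall k, (G k : {set {perm 'I_k}}) = Sstar k).
Proof.
move=> fG wG /trivgPn [s sG s1].
case: (@step1 G s fG wG sG s1) => [h2|h3]; first by left; exact: (@fullS G fG h2).
have S := @starS G fG h3.
case: (classic (forall k, G k \subset Sstar k)) => [all|nall].
  by right => k; apply/eqP; rewrite eqEsubset all S.
left; case: (not_all_ex_not _ _ nall) => k /negP /subsetPn [t tG nt].
apply: (@fullS G fG); apply: PP_lp; apply: (@P_to2 G (k + 2) fG wG); first lia.
exact: (@caseB G k t fG S tG nt).
Qed.
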